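(* Let $X$ be a Banach space, $f:X\to\mathbb{R}\cup\{+\infty\}$ convex and lower semicontinuous, $\bar x\in[f\le0]$, $\tau>0$, $q\in(0,1]$, and adopt the convention $0^0=1$. Consider the conditions: (i) there is a neighbourhood $U$ of $\bar x$ such that $\tau\, d(x,[f\le0])\le f_+^q(x)$ for all $x\in U$; (ii) there is a neighbourhood $U$ of $\bar x$ such that $q f^{q-1}(x)\, d(0,\partial f(x))\ge\tau$ for all $x\in U\cap[f>0]$; (iii) there is a neighbourhood $U$ of $\bar x$ such that $q^q(1-q)^{1-q}d(x,[f\le0])^{q-1}d(0,\partial f(x))^q\ge\tau$ for all $x\in U\cap[f>0]$. Then: (a) (ii) implies (i), and (i) implies (ii) with $q\tau$ in place of $\tau$ (i.e. if (i) holds with constant $\tau$ then (ii) holds with constant $q\tau$); (b) (iii) implies (i), and (i) implies (iii) with $q^q(1-q)^{1-q}\tau$ in place of $\tau$. If $q=1$, all the conditions are equivalent.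
   Context: $[f\le0]=\{x: f(x)\le0\}$, $[f>0]=\{x:f(x)>0\}$, $f_+(x)=\max\{f(x),0\}$; for $f(x)\ge0$, $f^q(x):=[f(x)]^q$, $f_+^q(x)=[f_+(x)]^q$. $d(x,A)=\inf_{a\in A}\|x-a\|$, $d(x,\emptyset)=+\infty$. $\partial f(x)$ is the subdifferential of convex analysis ($\emptyset$ if $f(x)=+\infty$); $d(0,\partial f(x))=\inf\{\|x^*\|:x^*\in\partial f(x)\}$ ($+\infty$ if empty). *)

(* Defs.v *)
From HB Require Import structures.
From mathcomp Require Import all_boot all_order all_algebra.
From mathcomp Require Import all_classical all_reals all_analysis.
Set Implicit Arguments. Unset Strict Implicit. Unset Printing Implicit Defensive.
Import Order.TTheory GRing.Theory Num.Theory.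
Import numFieldNormedType.Exports.
Local Open Scope classical_set_scope.
Local Open Scope ring_scope.

Section Defs.
Context {R : realType} {X : normedModType R}.

Definition econvex (f : X -> \bar R) : Prop :=
  forall (x y : X) (t : R), 0 < t -> t < 1 ->
    (f (t *: x + (1 - t) *: y)%R <= t%:E * f x + (1 - t)%:E * f y)%E.

Definition is_lin_functional (phi : X -> R) : Prop :=
  (forall (a : R) (u v : X), phi (a *: u + v) = a * phi u + phi v).

Definition dual_elt (phi : X -> R) : Prop :=
  is_lin_functional phi /\ continuous phi.

Definition dual_norm (phi : X -> R) : \bar R :=
  ereal_sup [set (`|phi x|)%:E | x in [set x : X | `|x| <= 1]].

Definition subdiff (f : X -> \bar R) (x : X) : set (X -> R) :=
  [set phi | dual_elt phi /\ f x \is a fin_num /\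
     forall y, (f x + (phi (y - x))%:E <= f y)%E].

(* d(0, subdiff f x), = +oo if the subdifferential is empty *)
Definition dist0_subdiff (f : X -> \bar R) (x : X) : \bar R :=
  ereal_inf [set dual_norm phi | phi in subdiff f x].

(* d(x, A), = +oo if A is empty *)
Definition edist (x : X) (A : set X) : \bar R :=
  ereal_inf [set (`|x - a|)%:E | a in A].

Definition sublevel0 (f : X -> \bar R) : set X := [set x | (f x <= 0)%E].

Definition cond_i (f : X -> \bar R) (xbar : X) (tau q : R) : Prop :=
  exists U : set X, nbhs xbar U /\
    forall x, U x -> (tau%:E * edist x (sublevel0 f) <= poweR (maxe (f x) 0) q)%E.

Definition cond_ii (f : X -> \bar R) (xbar : X) (tau q : R) : Prop :=
  exists U : set X, nbhs xbar U /\
    forall x, U x -> (0 < f x)%E -> (f x < +oo)%E ->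
      (tau%:E <= q%:E * poweR (f x) (q - 1) * dist0_subdiff f x)%E.

Definition cond_iii (f : X -> \bar R) (xbar : X) (tau q : R) : Prop :=
  exists U : set X, nbhs xbar U /\
    forall x, U x -> (0 < f x)%E ->
      (tau%:E <= (powR q q * powR (1 - q) (1 - q))%:E
                 * poweR (edist x (sublevel0 f)) (q - 1)
                 * poweR (dist0_subdiff f x) q)%E.

End Defs.

(* Main.v *)
Require Import Defs.
From HB Require Import structures.
From mathcomp Require Import all_boot all_order all_algebra.
From mathcomp Require Import all_classical all_reals all_analysis.
From mathcomp Require Import ring lra.
Require Import Defs.
Import Order.TTheory GRing.Theory Num.Theory.
Import numFieldNormedType.Exports.
Local Open Scope classical_set_scope.
Local Open Scope ring_scope.

Section HBsec.
Context {R : realType} {X : lmodType R}.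
Variable D : X -> R -> Prop.
Hypothesis Dex : forall y, exists r, D y r.
Hypothesis D0 : forall r, D 0 r -> 0 <= r.
Hypothesis Dcvx : forall y1 y2 r1 r2 l, 0 < l -> l < 1 -> D y1 r1 -> D y2 r2 ->
       D (l *: y1 + (1 - l) *: y2) (l * r1 + (1 - l) * r2).

Definition LG (G : set (X * R)) :=
  [/\ (forall x a b, G (x, a) -> G (x, b) -> a = b),
      (forall x y a b s, G (x, a) -> G (y, b) -> G (s *: x + y, s * a + b)) &
      (forall x a r, G (x, a) -> D x r -> a <= r)].

Lemma LG_chain (F : set (set (X * R))) : F `<=` LG -> total_on F subset ->
  LG (\bigcup_(G in F) G).
Proof.
move=> FL tot; split.
- move=> x a b [G1 FG1 G1a] [G2 FG2 G2b].
  have [s12|s21] := tot _ _ FG1 FG2.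
  + have [+ _ _] := FL _ FG2; apply; [exact: (s12 _ G1a) | exact: G2b].
  + have [+ _ _] := FL _ FG1; apply; [exact: G1a | exact: (s21 _ G2b)].
- move=> x y a b s [G1 FG1 G1a] [G2 FG2 G2b].
  have [s12|s21] := tot _ _ FG1 FG2.
  + exists G2 => //; have [_ + _] := FL _ FG2; apply; [exact: (s12 _ G1a) | exact: G2b].
  + exists G1 => //; have [_ + _] := FL _ FG1; apply; [exact: G1a | exact: (s21 _ G2b)].
- move=> x a r [G FG Ga]; have [_ _ +] := FL _ FG; exact.
Qed.

Lemma LG0 : LG [set (0, 0)].
Proof.
split.
- by move=> x a b /= [_ ->] [_ ->].
- by move=> x y a b s [-> ->] [-> ->]; rewrite scaler0 add0r mulr0 add0r.
- by move=> x a r [-> ->]; exact: D0.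
Qed.

Lemma LG_zero G : LG G -> (exists p, G p) -> G (0, 0).
Proof.
move=> [_ cl _] [[x a] Ga].
have := cl _ _ _ _ (-1) Ga Ga.
by rewrite scaleN1r addNr mulN1r addNr.
Qed.

Lemma LG_scale G x a s : LG G -> G (x, a) -> G (s *: x, s * a).
Proof.
move=> LGG Ga; have G0 : G (0, 0) by apply: LG_zero => //; exists (x, a).
have [_ cl _] := LGG.
by have := cl _ _ _ _ s Ga G0; rewrite addr0 addr0.
Qed.


Lemma HB_main : exists phi : X -> R,
  (forall a u v, phi (a *: u + v) = a * phi u + phi v) /\
  (forall y r, D y r -> phi y <= r).
Proof.
have [A [LGA maxA]] := Zorn_bigcup LG_chain.
have A0 : A (0, 0).
  apply: LG_zero => //.
  have [//|nA] := pselect (exists p, A p).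
  exfalso; apply: (maxA [set (0, 0)]) LG0; split.
  - by move=> p Ap; case: nA; exists p.
  - by move=> sub; apply: nA; exists (0, 0); apply: sub.
have [Afun Acl Adom] := LGA.
have tot : forall x, exists a, A (x, a).
  move=> x0; have [//|nx] := pselect (exists a, A (x0, a)).
  exfalso.
  pose Lw := [set v | exists m a s r,
     [/\ A (m, a), 0 < s, D (m - s *: x0) r & v = (a - r) / s]].
  have key : forall m a s r m' a' t r', A (m, a) -> 0 < s ->
      D (m - s *: x0) r -> A (m', a') -> 0 < t -> D (m' + t *: x0) r' ->
      (a - r) / s <= (r' - a') / t.
    move=> m a s r m' a' t r' Am s0 Dr Am' t0 Dr'.
    have st0 : 0 < s + t by rewrite addr_gt0.
    pose l := t / (s + t).
    have l0 : 0 < l by rewrite divr_gt0.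
    have l1 : l < 1 by rewrite ltr_pdivrMr // mul1r ltrDr.
    have ls : l * s = (1 - l) * t by rewrite /l; field; rewrite gt_eqF.
    have := Dcvx _ _ _ _ _ l0 l1 Dr Dr'.
    have -> : l *: (m - s *: x0) + (1 - l) *: (m' + t *: x0) =
              l *: m + (1 - l) *: m'.
      rewrite scalerBr scalerDr !scalerA ls.
      by rewrite addrACA addNr addr0.
    have Acomb : A (l *: m + (1 - l) *: m', l * a + (1 - l) * a').
      exact: Acl _ _ _ _ l Am (LG_scale _ _ _ (1 - l) LGA Am').
    move=> /(Adom _ _ _ Acomb).
    have e : forall u v, l * u + (1 - l) * v = (t * u + s * v) / (s + t).
      by move=> u v; rewrite /l; field; rewrite gt_eqF.
    rewrite !e ler_pM2r ?invr_gt0 // => h.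
    rewrite ler_pdivrMr // mulrAC ler_pdivlMr //.
    lra.
  have [r1 Dr1] := Dex (0 - 1 *: x0).
  have [r2 Dr2] := Dex (0 + 1 *: x0).
  have Lw0 : Lw !=set0 by exists ((0 - r1) / 1), 0, 0, 1, r1.
  have Lwub : ubound Lw ((r2 - 0) / 1).
    move=> v [m [a [s [r [Am s0 Dr ->]]]]].
    exact: key Am s0 Dr A0 ltr01 Dr2.
  have hs : has_sup Lw by split => //; exists ((r2 - 0) / 1).
  pose c := sup Lw.
  pose A' := [set p | exists m a t, A (m, a) /\ p = (m + t *: x0, a + t * c)].
  have LGA' : LG A'.
    split.
    - move=> x a b [m1 [a1 [t1 [Am1 [e1 e1']]]]] [m2 [a2 [t2 [Am2 [e2 e2']]]]].
      have [tt|tt] := eqVneq t1 t2.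
      + subst t2; have mm : m1 = m2 by apply: (addIr (t1 *: x0)); rewrite -e1 -e2.
        subst m2; by rewrite e1' e2' (Afun _ _ _ Am1 Am2).
      + exfalso; apply: nx.
        have Ad : A (m2 - m1, a2 - a1).
          have := Acl _ _ _ _ (-1) Am1 Am2.
          by rewrite scaleN1r mulN1r addrC [- a1 + _]addrC.
        exists ((t1 - t2)^-1 * (a2 - a1)).
        have -> : x0 = (t1 - t2)^-1 *: (m2 - m1).
          have h : (t1 - t2) *: x0 = m2 - m1.
            rewrite scalerBl; apply: (addIr (t2 *: x0)); rewrite subrK.
            by rewrite addrAC -e2 e1 addrAC subrr add0r.
          by rewrite -h scalerA mulVf ?scale1r // subr_eq0.
        exact: LG_scale.
    - move=> x y a b s [m1 [a1 [t1 [Am1 [-> ->]]]]] [m2 [a2 [t2 [Am2 [-> ->]]]]].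
      exists (s *: m1 + m2), (s * a1 + a2), (s * t1 + t2); split.
        exact: Acl.
      congr (_, _).
        by rewrite scalerDr scalerA scalerDl addrACA.
      by rewrite mulrDr mulrA mulrDl addrACA.
    - move=> x a r [m [a1 [t [Am [-> ->]]]]] Dr.
      have [t0|t0|t00] := ltgtP t 0.
      + have hv : Lw ((a1 - r) / (- t)).
          exists m, a1, (- t), r; split => //; first by rewrite oppr_gt0.
          by rewrite scaleNr opprK.
        have := sup_upper_bound hs hv.
        rewrite ler_pdivrMr ?oppr_gt0 // => h.
        rewrite -/c in h; lra.
      + have : c <= (r - a1) / t.
          apply: ge_sup => // v [m' [a' [s [r' [Am' s0 Dr' ->]]]]].
          exact: key Am' s0 Dr' Am t0 Dr.
        rewrite ler_pdivlMr // => h; lra.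
      + by move: Dr; rewrite t00 scale0r addr0 mul0r addr0; apply: Adom.
  apply: (maxA A') LGA'; split.
    move=> [m a] Am; exists m, a, 0; split => //.
    by rewrite scale0r addr0 mul0r addr0.
  move=> sub; apply: nx; exists c.
  apply: sub; exists 0, 0, 1; split => //.
  by rewrite scale1r add0r mul1r add0r.
pose phi := fun x => projT1 (cid (tot x)).
have Aphi : forall x, A (x, phi x) by move=> x; rewrite /phi; case: cid.
exists phi; split.
  move=> a u v; apply: (Afun (a *: u + v)); first exact: Aphi.
  exact: Acl.
by move=> y r Dr; apply: (Adom y); first exact: Aphi.
Qed.

End HBsec.


Lemma ekeland (R : realType) (X : completeNormedModType R) (G : X -> R)
    (x0 : X) (a : R) :
  0 < a -> (forall y, 0 <= G y) -> (forall r, closed [set y | G y <= r]) ->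
  exists z, G z + a * `|z - x0| <= G x0 /\ forall y, G z <= G y + a * `|y - z|.
Proof.
move=> a0 G0 Gcl.
pose S x := [set y | G y + a * `|y - x| <= G x].
have Srefl x : S x x by rewrite /S /= subrr normr0 mulr0 addr0.
have Strans x y w : S x y -> S y w -> S x w.
  rewrite /S /= => hy hw.
  apply: le_trans hy; apply: le_trans (lerD hw (lexx (a * `|y - x|))).
  by rewrite -addrA lerD2l -mulrDr ler_pM2l // ler_distD.
have Sinf x (n : nat) : exists y, S x y /\ G y <= inf (G @` S x) + n.+1%:R^-1.
  have hi : has_inf (G @` S x).
    split; first by exists (G x), x.
    by exists 0 => _ [y _ <-].
  have e0 : 0 < n.+1%:R^-1 :> R by rewrite invr_gt0 ltr0Sn.
  have [_ [y Sy <-] lt] := inf_adherent e0 hi.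
  by exists y; split => //; apply: ltW.
pose nxt x n := projT1 (cid (Sinf x n)).
have nxtP x n : S x (nxt x n) /\ G (nxt x n) <= inf (G @` S x) + n.+1%:R^-1.
  by rewrite /nxt; case: cid.
pose xs := fix F n := if n is n'.+1 then nxt (F n') n' else x0.
have xsS n : S (xs n) (xs n.+1) by have [] := nxtP (xs n) n.
have tail n k : (n <= k)%N -> S (xs n) (xs k).
  elim: k => [|k IH]; first by rewrite leqn0 => /eqP ->.
  rewrite leq_eqVlt => /orP[/eqP ->//|]; rewrite ltnS => /IH h.
  exact: Strans h (xsS k).
have small n y : S (xs n.+1) y -> a * `|y - xs n.+1| <= n.+1%:R^-1.
  move=> Sy; have Sy' : S (xs n) y := Strans _ _ _ (xsS n) Sy.
  have [_ hinf] := nxtP (xs n) n.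
  have : inf (G @` S (xs n)) <= G y.
    apply: ge_inf; last by exists y.
    by exists 0 => _ [w _ <-].
  move: Sy; rewrite /S /= => Sy hy.
  have e : xs n.+1 = nxt (xs n) n by [].
  rewrite -e in hinf; move: Sy hinf hy; rewrite /S /=. move=> h1 h2 h3; rewrite -(lerD2l (G y)); apply: (le_trans h1); apply: (le_trans h2); by rewrite lerD2r.
have cvx : cvg (xs @ \oo).
  apply/cauchy_cvgP/cauchy_exP => eps eps0.
  have [N hN] := @ltr_add_invr R 0 (a * eps) (mulr_gt0 a0 eps0).
  exists (xs N.+1); exists N.+1 => // k /= Nk.
  rewrite -ball_normE /ball_ /= distrC.
  have := small N (xs k) (tail _ _ Nk).
  rewrite add0r in hN => h.
  rewrite -(ltr_pM2l a0); exact: le_lt_trans h hN.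
pose z := lim (xs @ \oo).
have xz : xs @ \oo --> z := cvx.
have Sz n : S (xs n) z.
  rewrite /S /=.
  suff h : forall e, 0 < e -> G z <= G (xs n) - a * `|z - xs n| + a * e.
    rewrite -lerBrDr; apply/ler_addgt0Pr => e e0.
    have := h (e / a) (divr_gt0 e0 a0).
    have -> : a * (e / a) = e by rewrite mulrC divfK // gt_eqF.
    by [].
  move=> e e0.
  have hk := (fcvgrPdist_lt _).1 xz e e0.
  apply: (closed_cvg _ (Gcl (G (xs n) - a * `|z - xs n| + a * e))) xz.
  near=> k.
  have hzk : `|z - xs k| < e by near: k; exact: hk.
  have nk : (n <= k)%N by near: k; exists n.
  have tk := tail _ _ nk; move: tk; rewrite /S /= => tk.
  have tri := ler_distD (xs k) z (xs n).
  have : a * `|z - xs n| <= a * `|z - xs k| + a * `|xs k - xs n|.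
    by rewrite -mulrDr ler_pM2l.
  have : a * `|z - xs k| <= a * e by rewrite ler_pM2l // ltW.
  move=> h1 h2; lra.
exists z; split; first by have := Sz 0%N.
move=> y; rewrite leNgt; apply/negP => hlt.
have Szy : S z y by rewrite /S /= ltW.
have hyz m : a * `|y - z| <= m.+1%:R^-1 + m.+1%:R^-1.
  have h1 := small m y (Strans _ _ _ (Sz m.+1) Szy).
  have h2 := small m z (Sz m.+1).
  have tri := ler_distD (xs m.+1) y z.
  have : a * `|y - z| <= a * `|y - xs m.+1| + a * `|xs m.+1 - z|.
    by rewrite -mulrDr ler_pM2l.
  rewrite [`|xs m.+1 - z|]distrC => h3; exact: le_trans h3 (lerD h1 h2).
have yz : y = z.
  have [/eqP|nz] := eqVneq `|y - z| 0; first by rewrite normr_eq0 subr_eq0 => /eqP.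
  have p : 0 < a * `|y - z| / 2.
    by rewrite divr_gt0 // mulr_gt0 // normr_gt0 -normr_eq0.
  have [k hm] := ltr_add_invr p.
  rewrite add0r in hm; have := ltrD hm hm; rewrite -splitr => h'.
  by have := le_lt_trans (hyz k) h'; rewrite ltxx.
by move: hlt; rewrite yz subrr normr0 mulr0 addr0 ltxx.
Unshelve. all: by end_near.
Qed.


Section basics.
Context {R : realType} {X : normedModType R}.

Lemma lin0 (phi : X -> R) : is_lin_functional phi -> phi 0 = 0.
Proof.
move=> h; have := h 1 0 0; rewrite scale1r addr0 mul1r => e.
by apply: (addrI (phi 0)); rewrite addr0 -e.
Qed.

Lemma linZ (phi : X -> R) a u : is_lin_functional phi -> phi (a *: u) = a * phi u.
Proof. by move=> h; have := h a u 0; rewrite addr0 lin0 // addr0. Qed.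

Lemma linN (phi : X -> R) u : is_lin_functional phi -> phi (- u) = - phi u.
Proof. by move=> h; rewrite -scaleN1r linZ // mulN1r. Qed.

Lemma linB (phi : X -> R) u v : is_lin_functional phi -> phi (u - v) = phi u - phi v.
Proof. by move=> h; have := h 1 u (- v); rewrite scale1r mul1r linN. Qed.

Lemma lin_cont (phi : X -> R) (L : R) : is_lin_functional phi ->
  (forall y, `|phi y| <= L * `|y|) -> continuous phi.
Proof.
move=> h hL x; apply/cvgrPdist_lt => e e0.
pose M := Num.max L 0 + 1.
have M0 : 0 < M by rewrite /M ltr_pwDr // le_max lexx orbT.
have hM y : `|phi y| <= M * `|y|.
  apply: (le_trans (hL y)); apply: ler_wpM2r => //.
  have : L <= Num.max L 0 by rewrite le_max lexx.
  rewrite /M; lra.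
apply/nbhs_ballP; exists (e / M) => /=; first by rewrite divr_gt0.
move=> y; rewrite -ball_normE /= => hy.
rewrite -linB //; apply: (le_lt_trans (hM _)).
by rewrite mulrC -ltr_pdivlMr.
Qed.

Lemma dual_norm_ge0 (phi : X -> R) : is_lin_functional phi -> (0 <= dual_norm phi)%E.
Proof.
move=> h; apply: le_ereal_sup_tmp; exists (`|phi 0|)%:E.
  by exists 0 => //=; rewrite normr0.
by rewrite lin0 // normr0.
Qed.

Lemma dual_norm_le (phi : X -> R) L : 0 <= L -> (forall y, `|phi y| <= L * `|y|) ->
  (dual_norm phi <= L%:E)%E.
Proof.
move=> L0 hL; apply: ge_ereal_sup => _ [y /= hy <-]; rewrite lee_fin.
apply: le_trans (hL y) _; rewrite -[leRHS]mulr1; exact: ler_wpM2l.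
Qed.

Lemma dual_norm_bound (phi : X -> R) v n : is_lin_functional phi ->
  dual_norm phi = n%:E -> `|phi v| <= n * `|v|.
Proof.
move=> h hn; have [->|v0] := eqVneq v 0; first by rewrite lin0 // !normr0 mulr0.
have nv : 0 < `|v| by rewrite normr_gt0.
pose u := `|v|^-1 *: v.
have nu : `|u| = 1 by rewrite normrZ normfV normr_id mulVf // gt_eqF.
have hu : (`|phi u|%:E <= dual_norm phi)%E.
  by apply: ereal_sup_ubound; exists u => //=; rewrite nu.
rewrite hn lee_fin in hu.
have -> : v = `|v| *: u by rewrite /u scalerA mulfV ?gt_eqF // scale1r.
rewrite linZ // normrM normr_id normrZ normr_id nu mulr1 mulrC.
exact: ler_wpM2r.
Qed.

Lemma edist_char (x : X) (S : set X) s0 : S s0 ->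
  exists D, [/\ edist x S = D%:E, 0 <= D, (forall s, S s -> D <= `|x - s|) &
    (forall e, (forall s, S s -> e <= `|x - s|) -> e <= D)].
Proof.
move=> Ss0.
have h1 : (edist x S <= (`|x - s0|)%:E)%E by apply: ereal_inf_lbound; exists s0.
have h0 : (0 <= edist x S)%E.
  by apply: le_ereal_inf_tmp => _ [s _ <-]; rewrite lee_fin.
have fin : edist x S \is a fin_num by rewrite ge0_fin_numE // (le_lt_trans h1) ?ltry.
exists (fine (edist x S)); split.
- by rewrite fineK.
- by rewrite fine_ge0.
- move=> s Ss; rewrite -lee_fin fineK //; apply: ereal_inf_lbound; by exists s.
- move=> e he; rewrite -lee_fin fineK //; apply: le_ereal_inf_tmp => _ [s Ss <-].
  by rewrite lee_fin he.
Qed.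

End basics.


Section powr.
Context {R : realType}.
Implicit Types u F q : R.

Lemma powR_canc F q : 0 < F -> F `^ (q - 1) * F `^ (1 - q) = 1.
Proof.
move=> F0; rewrite -powRD; last by rewrite (gt_eqF F0) /= implybT.
by rewrite addrA subrK subrr powRr0.
Qed.

Lemma tangent_powR u F q : 0 < q -> q <= 1 -> 0 <= u -> 0 < F ->
  u `^ q <= F `^ q + q * F `^ (q - 1) * (u - F).
Proof.
move=> q0 q1 u0 F0.
have FP : F * F `^ (q - 1) = F `^ q by rewrite mulr_powRB1 // ltW.
have [->|q1'] := eqVneq q 1.
  by rewrite subrr powRr0 !mul1r (powRr1 u0) (powRr1 (ltW F0)) addrC subrK.
have q1s : q < 1 by rewrite lt_neqAle q1' q1.
have Y : u `^ q * F `^ (1 - q) <= (u `^ q) `^ (q^-1) / q^-1 +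
           (F `^ (1 - q)) `^ ((1 - q)^-1) / (1 - q)^-1.
  have ip : 0 < q^-1 by rewrite invr_gt0.
  have iq : 0 < (1 - q)^-1 by rewrite invr_gt0 subr_gt0.
  have sm : q^-1^-1 + (1 - q)^-1^-1 = 1 by rewrite !invrK addrC subrK.
  exact: (@conjugate_powR R _ _ _ _ (powR_ge0 _ _) (powR_ge0 _ _) ip iq sm).
have qn : q != 0 by rewrite gt_eqF.
have q1n : 1 - q != 0 by rewrite gt_eqF // subr_gt0.
rewrite -!powRrM (mulfV qn) (mulfV q1n) (powRr1 u0) (powRr1 (ltW F0)) !invrK in Y.
have P0 : 0 < F `^ (q - 1) by rewrite powR_gt0.
have := ler_wpM2r (ltW P0) Y.
have -> : u `^ q * F `^ (1 - q) * F `^ (q - 1) = u `^ q.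
  by rewrite -mulrA [X in _ * X]mulrC powR_canc // mulr1.
move=> h.
rewrite -FP.
have -> : F * F `^ (q - 1) + q * F `^ (q - 1) * (u - F) =
          (u * q + F * (1 - q)) * F `^ (q - 1) by ring.
exact: h.
Qed.
Lemma alg_key q a Fz : 0 < q -> 0 < Fz ->
  q * Fz `^ (q - 1) * (a * Fz `^ (1 - q) / q) = a.
Proof.
move=> q0 Fz0.
have -> : q * Fz `^ (q - 1) * (a * Fz `^ (1 - q) / q) =
   a * (Fz `^ (q - 1) * Fz `^ (1 - q)) * (q / q) by ring.
by rewrite powR_canc // mulfV ?gt_eqF // !mulr1.
Qed.

Lemma alg_iii q a Fz Dz : 0 < q -> q <= 1 -> 0 < a -> 0 < Fz -> 0 < Dz ->
  Fz `^ q < a * Dz ->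
  q `^ q * (1 - q) `^ (1 - q) * Dz `^ (q - 1) * (a * Fz `^ (1 - q) / q) `^ q <= a.
Proof.
move=> q0 q1 a0 Fz0 Dz0 hF.
have q1' : 0 <= 1 - q by rewrite subr_ge0.
have qi0 : 0 <= q^-1 by rewrite invr_ge0 ltW.
have aF0 : 0 <= a * Fz `^ (1 - q) by rewrite mulr_ge0 ?powR_ge0 // ltW.
rewrite (powRM _ aF0 qi0) (powRM _ (ltW a0) (powR_ge0 _ _)).
rewrite powRAC.
have hB : (Fz `^ q) `^ (1 - q) <= a `^ (1 - q) * Dz `^ (1 - q).
  rewrite -powRM; [|exact: ltW a0|exact: ltW Dz0].
  have h1 : Fz `^ q \in Num.nneg by rewrite nnegrE powR_ge0.
  have h2 : a * Dz \in Num.nneg by rewrite nnegrE mulr_ge0 // ltW.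
  exact: (@ge0_ler_powR R (1 - q) q1' _ _ h1 h2 (ltW hF)).
have hc : (1 - q) `^ (1 - q) <= 1.
  have h1 : 1 - q \in Num.nneg by rewrite nnegrE.
  have h2 : (1 : R) \in Num.nneg by rewrite nnegrE.
  have := @ge0_ler_powR R (1 - q) q1' _ _ h1 h2.
  rewrite powR1; apply; lra.
have hq : q `^ q * q^-1 `^ q = 1.
  by rewrite -powRM ?invr_ge0 ?ltW // mulfV ?gt_eqF // powR1.
have ha : a `^ q * a `^ (1 - q) = a.
  rewrite -powRD; last by rewrite (gt_eqF a0) implybT.
  by rewrite (_ : q + (1 - q) = 1) ?powRr1 ?(ltW a0) //; ring.
have hD := powR_canc Dz q Dz0.
set Bq := (Fz `^ q) `^ (1 - q).
have nn : 0 <= q `^ q * (1 - q) `^ (1 - q) * Dz `^ (q - 1) * a `^ q * q^-1 `^ q.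
  by rewrite !mulr_ge0 ?powR_ge0.
have step := ler_wpM2l nn hB.
have -> : q `^ q * (1 - q) `^ (1 - q) * Dz `^ (q - 1) * (a `^ q * Bq * q^-1 `^ q)
  = q `^ q * (1 - q) `^ (1 - q) * Dz `^ (q - 1) * a `^ q * q^-1 `^ q * Bq by ring.
apply: (le_trans step).
have -> : q `^ q * (1 - q) `^ (1 - q) * Dz `^ (q - 1) * a `^ q * q^-1 `^ q *
    (a `^ (1 - q) * Dz `^ (1 - q)) =
  (1 - q) `^ (1 - q) * (q `^ q * q^-1 `^ q) * (a `^ q * a `^ (1 - q)) *
    (Dz `^ (q - 1) * Dz `^ (1 - q)) by ring.
rewrite hq ha hD mulr1 mulr1.
by rewrite -[leRHS]mul1r ler_wpM2r // ltW.
Qed.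

End powr.


Section core.
Context {R : realType} {X : completeNormedModType R}.
Variables (f : X -> \bar R) (q : R).
Hypotheses (fNy : forall x, f x != -oo%E) (fcvx : econvex f)
  (flsc : lower_semicontinuous f) (q0 : 0 < q) (q1 : q <= 1).

Definition trunc (F : R) (y : X) : R :=
  match f y with r%:E => Num.min (Num.max r 0) F | +oo%E => F | -oo%E => 0 end.

Lemma trunc_ge0 F y : 0 <= F -> 0 <= trunc F y.
Proof.
move=> F0; rewrite /trunc; case: (f y) => [r| |] //.
by rewrite le_min F0 le_max lexx orbT.
Qed.

Lemma trunc_le F y : 0 <= F -> trunc F y <= F.
Proof. by move=> F0; rewrite /trunc; case: (f y) => [r| |] //; rewrite ge_min lexx orbT. Qed.

Lemma trunc_sub F s y : 0 <= s -> s < F -> (trunc F y <= s) = (f y <= s%:E)%E.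
Proof.
move=> s0 sF; rewrite /trunc; have := fNy y; case: (f y) => [r| |] // _.
- by rewrite lee_fin ge_min (leNgt F s) sF orbF ge_max s0 andbT.
- by rewrite (leNgt F s) sF leye_eq.
Qed.

Lemma powR_le_iff t r : 0 <= t -> 0 <= r -> (t `^ q <= r) = (t <= r `^ q^-1).
Proof.
move=> t0 r0; have qi : 0 <= q^-1 by rewrite invr_ge0 ltW.
apply/idP/idP => h.
- have := ge0_ler_powR qi (powR_ge0 t q) r0 h.
  by rewrite -powRrM mulfV ?gt_eqF // powRr1.
- have := ge0_ler_powR (ltW q0) t0 (powR_ge0 r _) h.
  by rewrite -powRrM mulVf ?gt_eqF // powRr1.
Qed.

Lemma G_closed F r : 0 < F -> closed [set y | trunc F y `^ q <= r].
Proof.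
move=> F0.
have [r0|r0] := ltP r 0.
  have -> : [set y | trunc F y `^ q <= r] = set0.
    apply/seteqP; split => y //= h; have := le_lt_trans h r0.
    by rewrite ltNge powR_ge0.
  exact: closed0.
pose s := r `^ q^-1.
have s0 : 0 <= s by exact: powR_ge0.
have eqs : [set y | trunc F y `^ q <= r] = [set y | trunc F y <= s].
  apply/seteqP; split => y /=; rewrite powR_le_iff //; exact: trunc_ge0 _ _ (ltW F0).
rewrite eqs.
have [sF|sF] := leP F s.
  have -> : [set y | trunc F y <= s] = setT.
    by apply/seteqP; split => y //= _; exact: le_trans (trunc_le _ _ (ltW F0)) sF.
  exact: closedT.
have -> : [set y | trunc F y <= s] = ~` [set y | (s%:E < f y)%E].
  apply/seteqP; split => y /=; rewrite trunc_sub //.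
  - by move=> h; apply/negP; rewrite -leNgt.
  - by move=> /negP; rewrite -leNgt.
apply: open_closedC.
by move/lower_semicontinuousP : flsc; apply.
Qed.

Lemma slope F z Fz a : f z = Fz%:E -> 0 < Fz -> Fz <= F -> 0 < a ->
  (forall y, Fz `^ q <= trunc F y `^ q + a * `|y - z|) ->
  forall y, ((Fz - a * Fz `^ (1 - q) / q * `|y - z|)%:E <= f y)%E.
Proof.
move=> fz Fz0 FzF a0 hmin y.
set L := a * Fz `^ (1 - q) / q.
have L0 : 0 < L by rewrite /L divr_gt0 // mulr_gt0 // powR_gt0.
rewrite leNgt; apply/negP => hlt.
have [yz|yz] := eqVneq y z.
  by move: hlt; rewrite yz fz subrr normr0 mulr0 subr0 ltxx.
set r := `|y - z|.
have r0 : 0 < r by rewrite /r normr_gt0 subr_eq0.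
have [wy fy] : exists wy, f y = wy%:E.
  move: hlt (fNy y); case: (f y) => [w| |] //; by exists w.
rewrite fy lte_fin in hlt.
have Lr0 : 0 < L * r by rewrite mulr_gt0.
pose t := Fz / (2 * (Fz + L * r)).
have t0 : 0 < t by rewrite /t divr_gt0 // mulr_gt0 // addr_gt0.
have teq : t * (2 * (Fz + L * r)) = Fz.
  by rewrite /t divfK // gt_eqF // mulr_gt0 // addr_gt0.
have tF : 0 < t * Fz by rewrite mulr_gt0.
have tLr : t * (L * r) < Fz / 2.
  move: teq; rewrite mulrDr mulrDr => teq. lra.
have t1 : t < 1.
  rewrite /t ltr_pdivrMr ?mulr_gt0 ?addr_gt0 // mul1r; lra.
pose yt := t *: y + (1 - t) *: z.
have hcv := fcvx y z t t0 t1.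
rewrite -/yt fy fz -!EFinM -EFinD in hcv.
pose v := Fz - t * (L * r).
have v0 : 0 < v by rewrite /v; lra.
have vF : v <= Fz by rewrite /v; have := mulr_gt0 t0 Lr0; lra.
have fyt : (f yt < v%:E)%E.
  apply: (le_lt_trans hcv); rewrite lte_fin /v.
  have : t * wy < t * (Fz - L * r) by rewrite ltr_pM2l.
  lra.
have tr : trunc F yt < v.
  move: fyt; rewrite /trunc; have := fNy yt; case: (f yt) => [w| |] // _.
  rewrite lte_fin => wv.
  by rewrite gt_min gt_max wv v0.
have Gyt : trunc F yt `^ q < v `^ q.
  apply: gt0_ltr_powR => //; rewrite nnegrE.
    exact: trunc_ge0 _ _ (le_trans (ltW Fz0) FzF).
  exact: ltW v0.
have nyt : `|yt - z| = t * r.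
  have -> : yt - z = t *: (y - z).
    by rewrite /yt scalerBl scale1r scalerBr addrA addrAC addrK.
  by rewrite normrZ gtr0_norm.
have hm := hmin yt; rewrite nyt in hm.
have tg := @tangent_powR R v Fz q q0 q1 (ltW v0) Fz0.
have key : q * Fz `^ (q - 1) * (v - Fz) = - (a * (t * r)).
  have PQ := @powR_canc R Fz q Fz0.
  have -> : q * Fz `^ (q - 1) * (v - Fz) =
     - (a * (t * r)) * (Fz `^ (q - 1) * Fz `^ (1 - q)) * (q / q).
    by rewrite /v /L; ring.
  by rewrite PQ mulfV ?gt_eqF // !mulr1.
rewrite key in tg.
clear -hm Gyt tg; lra.
Qed.

Lemma subgrad z Fz L : f z = Fz%:E -> 0 <= L ->
  (forall y, ((Fz - L * `|y - z|)%:E <= f y)%E) ->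
  exists phi, subdiff f z phi /\ (dual_norm phi <= L%:E)%E.
Proof.
move=> fz L0 hsl.
pose Drel (y : X) (r : R) := exists u w, f (z + u) = w%:E /\ w - Fz + L * `|y - u| <= r.
have Dex : forall y, exists r, Drel y r.
  move=> y; exists (L * `|y|), 0, Fz; split; first by rewrite addr0.
  by rewrite subrr add0r subr0.
have D0 : forall r, Drel 0 r -> 0 <= r.
  move=> r [u [w [fu hu]]].
  have ezu : z + u - z = u by rewrite addrC addKr.
  have := hsl (z + u); rewrite fu lee_fin ezu.
  move: hu; rewrite sub0r normrN => hu h; lra.
have Dcvx : forall y1 y2 r1 r2 l, 0 < l -> l < 1 -> Drel y1 r1 -> Drel y2 r2 ->
    Drel (l *: y1 + (1 - l) *: y2) (l * r1 + (1 - l) * r2).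
  move=> y1 y2 r1 r2 l l0 l1 [u1 [w1 [fu1 hu1]]] [u2 [w2 [fu2 hu2]]].
  have l0' : 0 < 1 - l by rewrite subr_gt0.
  have hc := fcvx (z + u1) (z + u2) l l0 l1.
  have ez : l *: (z + u1) + (1 - l) *: (z + u2) = z + (l *: u1 + (1 - l) *: u2).
    rewrite !scalerDr addrACA -scalerDl (_ : l + (1 - l) = 1); last by ring.
    by rewrite scale1r.
  rewrite ez fu1 fu2 -!EFinM -EFinD in hc.
  have [w fw] : exists w, f (z + (l *: u1 + (1 - l) *: u2)) = w%:E.
    move: hc (fNy (z + (l *: u1 + (1 - l) *: u2))).
    by case: (f _) => [w'| |] //; exists w'.
  exists (l *: u1 + (1 - l) *: u2), w; split => //.
  rewrite fw lee_fin in hc.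
  have en : l *: y1 + (1 - l) *: y2 - (l *: u1 + (1 - l) *: u2) =
            l *: (y1 - u1) + (1 - l) *: (y2 - u2).
    by rewrite !scalerBr opprD addrACA.
  have nt : `|l *: y1 + (1 - l) *: y2 - (l *: u1 + (1 - l) *: u2)| <=
            l * `|y1 - u1| + (1 - l) * `|y2 - u2|.
    rewrite en; apply: (le_trans (ler_normD _ _)).
    by rewrite !normrZ !gtr0_norm.
  have h1 := ler_wpM2l L0 nt.
  have h2 := ler_wpM2l (ltW l0) hu1.
  have h3 := ler_wpM2l (ltW l0') hu2.
  clear -h1 h2 h3 hc; lra.
have [phi [philin phiD]] := @HB_main R X Drel Dex D0 Dcvx.
have phiub y : phi y <= L * `|y|.
  by apply: phiD; exists 0, Fz; rewrite addr0 subrr add0r subr0.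
have phiabs y : `|phi y| <= L * `|y|.
  rewrite ler_norml phiub andbT.
  have := phiub (- y); rewrite linN // normrN; lra.
exists phi; split; last exact: dual_norm_le.
split; first by split => //; exact: lin_cont phiabs.
split; first by rewrite fz.
move=> w; have := fNy w; case fw: (f w) => [w'| |] // _; last by rewrite leey.
rewrite fz -EFinD lee_fin.
have : phi (w - z) <= w' - Fz.
  apply: phiD; exists (w - z), w'; split; first by rewrite addrCA subrr addr0.
  by rewrite subrr normr0 mulr0 addr0.
lra.
Qed.

Lemma core x F D a xbar : (f xbar <= 0)%E -> f x = F%:E -> 0 < F ->
  edist x (sublevel0 f) = D%:E -> 0 < a -> F `^ q < a * D ->
  exists z Fz Dz phi, [/\ `|z - x| < D, f z = Fz%:E, 0 < Fz,
    edist z (sublevel0 f) = Dz%:E & Fz `^ q < a * Dz] /\ (subdiff f z phi /\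
    (dual_norm phi <= (a * Fz `^ (1 - q) / q)%:E)%E).
Proof.
move=> fxbar fx F0 eD a0 FaD.
have Sxbar : sublevel0 f xbar by [].
have [D' [eD' D0 DS Dmax]] := @edist_char R X x (sublevel0 f) xbar Sxbar.
have eDD : D' = D by apply: EFin_inj; rewrite -eD' eD.
subst D'.
pose G y := trunc F y `^ q.
have [z [h1 hmin]] := @ekeland R X G x a a0 (fun y => powR_ge0 _ _) (fun r => G_closed F r F0).
have tx : trunc F x = F.
  apply/eqP; rewrite eq_le trunc_le ?(ltW F0) //=.
  by rewrite /trunc fx le_min lexx le_max lexx.
have Gx : G x = F `^ q by rewrite /G tx.
have Gz0 : 0 <= G z by exact: powR_ge0.
have nzx0 : 0 <= `|z - x| by [].
have zxD : `|z - x| < D.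
  rewrite -(ltr_pM2l a0); move: h1; rewrite Gx => h1.
  clear -h1 Gz0 FaD; lra.
have zS : ~ sublevel0 f z.
  move=> Sz; have := DS z Sz; rewrite distrC => h.
  by have := lt_le_trans zxD h; rewrite ltxx.
have zx_or : trunc F z < F \/ z = x.
  have [lt|ge] := ltP (trunc F z) F; first by left.
  right; have te : trunc F z = F by apply/eqP; rewrite eq_le ge trunc_le // ltW.
  move: h1; rewrite Gx /G te => h1.
  have : a * `|z - x| <= 0 by clear -h1; lra.
  rewrite pmulr_rle0 // normr_le0 subr_eq0 => /eqP //.
have [Fz [fz Fz0 FzF tz]] : exists Fz, [/\ f z = Fz%:E, 0 < Fz, Fz <= F & trunc F z = Fz].
  case: zx_or => [lt|->]; last by exists F; split.
  move: lt zS; rewrite /trunc /sublevel0 /=; have := fNy z.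
  case: (f z) => [r| |] // _.
  - rewrite lee_fin => lt /negP; rewrite -ltNge => r0.
    have mr : Num.max r 0 = r by apply/eqP; rewrite eq_le ge_max lexx ltW //= le_max lexx.
    rewrite mr in lt *.
    have rF : r < F by move: lt; rewrite gt_min ltxx orbF.
    exists r; split => //; first exact: ltW rF.
    by apply/eqP; rewrite eq_le ge_min lexx le_min lexx (ltW rF).
  - by rewrite ltxx.
have sF := @edist_char R X z (sublevel0 f) xbar Sxbar.
have [Dz [eDz Dz0 DzS Dzmax]] := sF.
have DzD : D - `|z - x| <= Dz.
  apply: Dzmax => s Ss; have := DS s Ss; have := ler_distD z x s.
  rewrite [`|x - z|]distrC => h h'; clear -h h'; lra.
have Gzq : G z = Fz `^ q by rewrite /G tz.
have FzaDz : Fz `^ q < a * Dz.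
  have : a * (D - `|z - x|) <= a * Dz by rewrite ler_pM2l.
  move: h1; rewrite Gzq Gx => h1 h2.
  clear -h1 h2 FaD; lra.
have hmin' : forall y, Fz `^ q <= trunc F y `^ q + a * `|y - z|.
  by move=> y; rewrite -Gzq; exact: hmin.
have hsl := slope F z Fz a fz Fz0 FzF a0 hmin'.
have L0 : 0 <= a * Fz `^ (1 - q) / q.
  by rewrite divr_ge0 ?mulr_ge0 ?powR_ge0 // ltW.
have [phi [phis phin]] := subgrad z Fz _ fz L0 hsl.
by exists z, Fz, Dz, phi.
Qed.

End core.


Section main.
Context {R : realType} {X : completeNormedModType R}.
Variables (f : X -> \bar R) (xbar : X) (tau q : R).
Hypotheses (fNy : forall x, f x != -oo%E) (fcvx : econvex f)
  (flsc : lower_semicontinuous f) (fxbar : (f xbar <= 0)%E)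
  (tau0 : 0 < tau) (q0 : 0 < q) (q1 : q <= 1).

Local Notation S := (sublevel0 f).

Lemma maxeF (F : R) : 0 <= F -> maxe (F%:E) 0 = F%:E.
Proof. by move=> F0; apply/eqP; rewrite eq_le ge_max lexx lee_fin F0 le_max lexx. Qed.

Lemma edist_inS x : S x -> edist x S = 0.
Proof.
move=> Sx; have [D [e D0 DS _]] := @edist_char R X x S x Sx.
have := DS x Sx; rewrite subrr normr0 => h.
by rewrite e; congr (_%:E); apply/eqP; rewrite eq_le h D0.
Qed.

Lemma edist_pos x : (0 < f x)%E ->
  exists D, [/\ edist x S = D%:E, 0 < D, D <= `|x - xbar| &
    forall e, (forall s, S s -> e <= `|x - s|) -> e <= D].
Proof.
move=> fx0.
have op : open [set y | (0%:E < f y)%E] by move/lower_semicontinuousP : flsc; apply.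
have : nbhs x [set y | (0%:E < f y)%E] by apply: open_nbhs_nbhs; split.
move=> /nbhs_ballP [e e0 he].
have [D [eD D0 DS Dmax]] := @edist_char R X x S xbar fxbar.
exists D; split => //; last exact: DS.
apply: lt_le_trans e0 _; apply: Dmax => s Ss; rewrite leNgt; apply/negP => hs.
have : ball x e s by rewrite -ball_normE /=.
move=> /he /=; rewrite ltNge.
by move: Ss; rewrite /sublevel0 /= => ->.
Qed.

Lemma sub_bound x F phi n : f x = F%:E -> subdiff f x phi ->
  dual_norm phi = n%:E -> forall s, S s -> F <= n * `|x - s|.
Proof.
move=> fx [[lin _] [_ sub]] eN s Ss.
have := sub s; rewrite fx => h.
have h2 : ((F + phi (s - x))%:E <= 0%:E)%E by apply: le_trans h Ss.
rewrite lee_fin in h2.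
have e : phi (s - x) = - phi (x - s) by rewrite -linN // opprB.
have := @dual_norm_bound R X phi (x - s) n lin eN.
have := ler_norm (phi (x - s)).
move: h2; rewrite e => h2 h3 h4; lra.
Qed.

Lemma dist0_ge0 x : (0 <= dist0_subdiff f x)%E.
Proof.
apply: le_ereal_inf_tmp => _ [phi [[lin _] _] <-].
exact: dual_norm_ge0.
Qed.

Lemma n_pos x F phi n : f x = F%:E -> 0 < F -> subdiff f x phi ->
  dual_norm phi = n%:E -> 0 < n.
Proof.
move=> fx F0 phis eN.
have n0 : 0 <= n.
  have [[lin _] _] := phis.
  by have := @dual_norm_ge0 R X phi lin; rewrite eN lee_fin.
have := sub_bound _ _ _ _ fx phis eN xbar fxbar.
rewrite lt_neqAle n0 andbT; apply: contraTneq => <-.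
by rewrite mul0r -ltNge.
Qed.

Lemma FnD x F phi n D : f x = F%:E -> 0 < F -> subdiff f x phi ->
  dual_norm phi = n%:E ->
  (forall e, (forall s, S s -> e <= `|x - s|) -> e <= D) -> F <= n * D.
Proof.
move=> fx F0 phis eN Dmax.
have n0 := n_pos _ _ _ _ fx F0 phis eN.
have : F / n <= D.
  apply: Dmax => s Ss; rewrite ler_pdivrMr // mulrC.
  exact: sub_bound _ _ _ _ fx phis eN s Ss.
by rewrite ler_pdivrMr // mulrC.
Qed.

Lemma i_ii : cond_i f xbar tau q -> cond_ii f xbar (q * tau) q.
Proof.
move=> [U [hU hi]]; exists U; split => // x Ux fx0 fxy.
have [F fx] : exists F, f x = F%:E.
  by move: fx0 fxy; case: (f x) => [F| |] //; exists F.
have F0 : 0 < F by rewrite fx lte_fin in fx0.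
have [D [eD D0 DS Dmax]] := @edist_char R X x S xbar fxbar.
have hiF : tau * D <= F `^ q.
  by have := hi x Ux; rewrite eD fx (maxeF F (ltW F0)) poweR_EFin -EFinM lee_fin.
pose P := F `^ (q - 1).
have P0 : 0 < P by rewrite powR_gt0.
have FP : F * P = F `^ q by rewrite mulr_powRB1 // ltW.
have lb : ((tau / P)%:E <= dist0_subdiff f x)%E.
  apply: le_ereal_inf_tmp => _ [phi phis <-].
  have [[lin _] _] := phis.
  have N0 := @dual_norm_ge0 R X phi lin.
  case eN: (dual_norm phi) => [n| |]; [|by rewrite leey| by rewrite eN in N0].
  have n0 := n_pos _ _ _ _ fx F0 phis eN.
  have hFn := FnD _ _ _ _ _ fx F0 phis eN Dmax.
  rewrite lee_fin ler_pdivrMr //.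
  have : tau * F <= tau * (n * D) by rewrite ler_pM2l.
  have : tau * D * n <= F `^ q * n by rewrite ler_pM2r.
  rewrite -FP => h1 h2.
  have : tau * F <= n * P * F.
    have e1 : tau * (n * D) = tau * D * n by ring.
    have e2 : F * P * n = n * P * F by ring.
    by rewrite e1 in h2; rewrite -e2; exact: le_trans h2 h1.
  by rewrite ler_pM2r.
rewrite fx poweR_EFin -EFinM.
have KP : (0 <= (q * P)%:E)%E by rewrite lee_fin mulr_ge0 // ltW.
apply: le_trans (lee_wpmul2l KP lb).
rewrite -EFinM lee_fin le_eqVlt; apply/orP; left; apply/eqP.
rewrite (_ : q * P * (tau / P) = q * tau * (P / P)); last by ring.
by rewrite mulfV ?gt_eqF // mulr1.
Qed.

Lemma c_pos : 0 < q `^ q * (1 - q) `^ (1 - q).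
Proof.
apply: mulr_gt0; first exact: powR_gt0.
have [->|q1'] := eqVneq q 1; first by rewrite subrr powRr0.
by apply: powR_gt0; rewrite subr_gt0 lt_neqAle q1' q1.
Qed.

Lemma dist0_noninf x : f x = +oo%E -> dist0_subdiff f x = +oo%E.
Proof.
move=> fx; apply/eqP; rewrite eq_le leey /=.
by apply: le_ereal_inf_tmp => _ [phi [_ [fin _]] <-]; rewrite fx in fin.
Qed.

Lemma i_iii : cond_i f xbar tau q ->
  cond_iii f xbar (q `^ q * (1 - q) `^ (1 - q) * tau) q.
Proof.
move=> [U [hU hi]]; exists U; split => // x Ux fx0.
have [D [eD D0 Dle Dmax]] := edist_pos x fx0.
pose c := q `^ q * (1 - q) `^ (1 - q).
have c0 : 0 < c := c_pos.
pose P := D `^ (q - 1).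
have P0 : 0 < P by rewrite powR_gt0.
rewrite eD poweR_EFin -EFinM.
have cP0 : 0 < c * P by rewrite mulr_gt0.
have := fNy x; case fx: (f x) => [F| |] // _; last first.
  by rewrite dist0_noninf // poweRyr ?gt_eqF // gt0_muley ?lte_fin // leey.
have F0 : 0 < F by rewrite fx lte_fin in fx0.
have hiF : tau * D <= F `^ q.
  by have := hi x Ux; rewrite eD fx (maxeF F (ltW F0)) poweR_EFin -EFinM lee_fin.
have DP : D * P = D `^ q by rewrite mulr_powRB1 // ltW.
have lb : (((tau / P) `^ q^-1)%:E <= dist0_subdiff f x)%E.
  apply: le_ereal_inf_tmp => _ [phi phis <-].
  have [[lin _] _] := phis.
  have N0 := @dual_norm_ge0 R X phi lin.
  case eN: (dual_norm phi) => [n| |]; [|by rewrite leey| by rewrite eN in N0].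
  have n0 := n_pos _ _ _ _ fx F0 phis eN.
  have hFn := FnD _ _ _ _ _ fx F0 phis eN Dmax.
  have hq : F `^ q <= (n * D) `^ q.
    apply: ge0_ler_powR => //; rewrite ?nnegrE //; [exact: ltW q0|exact: ltW F0|].
    by rewrite mulr_ge0 // ltW.
  rewrite powRM ?(ltW n0) ?(ltW D0) // -DP in hq.
  have h1 : tau <= n `^ q * P.
    rewrite -(ler_pM2r D0); apply: le_trans hiF _; apply: le_trans hq _.
    by rewrite le_eqVlt; apply/orP; left; apply/eqP; ring.
  have h2 : tau / P <= n `^ q by rewrite ler_pdivrMr.
  rewrite lee_fin.
  have qi : 0 <= q^-1 by rewrite invr_ge0 ltW.
  have m1 : tau / P \in Num.nneg by rewrite nnegrE divr_ge0 // ltW.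
  have m2 : n `^ q \in Num.nneg by rewrite nnegrE powR_ge0.
  have := @ge0_ler_powR R q^-1 qi (tau / P) (n `^ q) m1 m2 h2.
  by rewrite -powRrM mulfV ?gt_eqF // powRr1 // ltW.
have i1 : ((tau / P) `^ q^-1)%:E \in `[0%E, +oo%E].
  by rewrite in_itv /= lee_fin powR_ge0 leey.
have i2 : dist0_subdiff f x \in `[0%E, +oo%E].
  by rewrite in_itv /= dist0_ge0 leey.
have mono := gt0_ler_poweR (ltW q0) i1 i2 lb.
have tP0 : 0 <= tau / P by rewrite divr_ge0 // ltW.
rewrite poweR_EFin -powRrM mulVf ?gt_eqF // (powRr1 tP0) in mono.
have cP0' : (0 <= (c * P)%:E)%E by rewrite lee_fin ltW.
apply: le_trans (lee_wpmul2l cP0' mono).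
rewrite -EFinM lee_fin le_eqVlt; apply/orP; left; apply/eqP.
rewrite (_ : c * P * (tau / P) = c * tau * (P / P)); last by ring.
by rewrite mulfV ?gt_eqF // mulr1.
Qed.

Lemma hard (U : set X) : nbhs xbar U ->
  (forall z Fz Dz phi a, U z -> 0 < a -> a < tau -> f z = Fz%:E -> 0 < Fz ->
    edist z S = Dz%:E -> Fz `^ q < a * Dz -> subdiff f z phi ->
    (dual_norm phi <= (a * Fz `^ (1 - q) / q)%:E)%E -> False) ->
  cond_i f xbar tau q.
Proof.
move=> hU H.
have [d d0 hd] := (nbhs_ballP _ _).1 hU.
exists (ball xbar (d / 2)); split; first by apply: nbhsx_ballx; rewrite divr_gt0.
move=> x; rewrite -ball_normE /= => hx.
have := fNy x; case fx: (f x) => [F| |] // _; last first.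
  by rewrite /maxe /= gt_eqF // leey.
have [F0|F0] := leP F 0.
  have Sx : S x by rewrite /sublevel0 /= fx lee_fin.
  by rewrite edist_inS // mule0 poweR_ge0.
have [D [eD D0 DS Dmax]] := @edist_char R X x S xbar fxbar.
rewrite eD (maxeF F (ltW F0)) poweR_EFin -EFinM lee_fin.
rewrite leNgt; apply/negP => hlt.
have Fq0 : 0 < F `^ q by rewrite powR_gt0.
have D0' : 0 < D.
  rewrite lt_neqAle D0 andbT; apply/negP => /eqP D0e.
  by move: hlt; rewrite -D0e mulr0 ltNge (ltW Fq0).
pose w := F `^ q / D.
have wD : w * D = F `^ q by rewrite /w divfK // gt_eqF.
have wt : w < tau by rewrite /w ltr_pdivrMr.
pose a := (tau + w) / 2.
have a0 : 0 < a by rewrite /a divr_gt0 // addr_gt0 // divr_gt0.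
have aT : a < tau by rewrite /a; lra.
have FaD : F `^ q < a * D.
  rewrite /a -wD (_ : (tau + w) / 2 * D = (tau * D + w * D) / 2); last by ring.
  lra.
have [z [Fz [Dz [phi [[zx fz Fz0 eDz FzDz] [phis phin]]]]]] :=
  @core R X f q fNy fcvx flsc q0 q1 x F D a xbar fxbar fx F0 eD a0 FaD.
have Uz : U z.
  apply: hd; rewrite -ball_normE /=.
  have t1 := ler_distD x xbar z.
  have t2 := DS xbar fxbar.
  rewrite [`|x - z|]distrC in t1; rewrite [`|x - xbar|]distrC in t2.
  apply: le_lt_trans t1 _.
  have h3 : `|z - x| < d / 2 := lt_le_trans zx (ltW (le_lt_trans t2 hx)).
  by rewrite [ltRHS]splitr; exact: ltrD hx h3.
exact: (H z Fz Dz phi a).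
Qed.

Lemma ii_i : cond_ii f xbar tau q -> cond_i f xbar tau q.
Proof.
move=> [U [hU hii]]; apply: (hard U hU) => z Fz Dz phi a Uz a0 aT fz Fz0 eDz FzDz phis phin.
have h0 : (0 < f z)%E by rewrite fz lte_fin.
have hy : (f z < +oo)%E by rewrite fz ltry.
have := hii z Uz h0 hy; rewrite fz poweR_EFin -EFinM => h.
have d0 : (dist0_subdiff f z <= dual_norm phi)%E by apply: ereal_inf_lbound; exists phi.
have K0 : (0 <= (q * Fz `^ (q - 1))%:E)%E by rewrite lee_fin mulr_ge0 ?powR_ge0 // ltW.
have := le_trans h (lee_wpmul2l K0 (le_trans d0 phin)).
rewrite -EFinM lee_fin alg_key // => ta.
by have := lt_le_trans aT ta; rewrite ltxx.
Qed.

Lemma iii_i : cond_iii f xbar tau q -> cond_i f xbar tau q.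
Proof.
move=> [U [hU hiii]]; apply: (hard U hU) => z Fz Dz phi a Uz a0 aT fz Fz0 eDz FzDz phis phin.
have h0 : (0 < f z)%E by rewrite fz lte_fin.
have := hiii z Uz h0; rewrite eDz poweR_EFin -EFinM => h.
have Dz0 : 0 < Dz.
  have : 0 < a * Dz := lt_trans (powR_gt0 q Fz0) FzDz.
  by rewrite pmulr_rgt0.
set L := a * Fz `^ (1 - q) / q.
have L0 : 0 <= L by rewrite /L divr_ge0 ?mulr_ge0 ?powR_ge0 // ltW.
have d0 : (dist0_subdiff f z <= L%:E)%E.
  by apply: le_trans phin; apply: ereal_inf_lbound; exists phi.
have i1 : dist0_subdiff f z \in `[0%E, +oo%E] by rewrite in_itv /= dist0_ge0 leey.
have i2 : L%:E \in `[0%E, +oo%E] by rewrite in_itv /= lee_fin L0 leey.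
have mono := gt0_ler_poweR (ltW q0) i1 i2 d0.
rewrite poweR_EFin in mono.
have K0 : (0 <= (q `^ q * (1 - q) `^ (1 - q) * Dz `^ (q - 1))%:E)%E.
  by rewrite lee_fin !mulr_ge0 ?powR_ge0.
have := le_trans h (lee_wpmul2l K0 mono).
rewrite -EFinM lee_fin => ta.
have := @alg_iii R q a Fz Dz q0 q1 a0 Fz0 Dz0 FzDz; rewrite -/L => tb.
by have := lt_le_trans aT (le_trans ta tb); rewrite ltxx.
Qed.

End main.

Theorem theorem3p34 (R : realType) (X : completeNormedModType R)
    (f : X -> \bar R) (xbar : X) (tau q : R) :
  (forall x, f x != -oo%E) ->
  econvex f ->
  lower_semicontinuous f ->
  (f xbar <= 0)%E ->
  0 < tau -> 0 < q -> q <= 1 ->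
  ((cond_ii f xbar tau q -> cond_i f xbar tau q) /\
   (cond_i f xbar tau q -> cond_ii f xbar (q * tau) q)) /\
  ((cond_iii f xbar tau q -> cond_i f xbar tau q) /\
   (cond_i f xbar tau q ->
      cond_iii f xbar (powR q q * powR (1 - q) (1 - q) * tau) q)) /\
  (q = 1 ->
   (cond_i f xbar tau q <-> cond_ii f xbar tau q) /\
   (cond_i f xbar tau q <-> cond_iii f xbar tau q)).
Proof.
move=> fNy fcvx flsc fxbar tau0 q0 q1.
split; [split|split; [split|]].
- by apply: ii_i.
- by apply: i_ii.
- by apply: iii_i.
- by apply: i_iii.
move=> q1e; subst q; split; split.
- move=> h; have h2 : cond_ii f xbar (1 * tau) 1 by apply: i_ii.
  by rewrite mul1r in h2.
- by apply: ii_i.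
- move=> h.
  have h2 : cond_iii f xbar (powR 1 1 * powR (1 - 1) (1 - 1) * tau) 1 by apply: i_iii.
  by rewrite powRr1 // subrr powRr0 !mul1r in h2.
- by apply: iii_i.
Qed.
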